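(* Let $\Omega$, $\Upsilon$, $\Gamma$ be finite sets, $n=|\Omega|$, and let $f\colon\Omega\to\Upsilon$ and $g\colon\Omega\to\Gamma$ be surjective. Let $V_\Omega=\mathbb{R}^\Omega$, let $V_\Upsilon\le V_\Omega$ be the subspace of vectors $v$ with $v(\omega)$ depending only on $f(\omega)$, and $V_\Gamma\le V_\Omega$ the subspace of vectors with $v(\omega)$ depending only on $g(\omega)$. Let $\mathcal{P}$, $\mathcal{Q}$, $\mathcal{R}$ be orthogonal decompositions of $V_\Omega$, $V_\Upsilon$, $V_\Gamma$, respectively, each containing the matrix $\mathbf{P}_0=\mathbf{Q}_0=\mathbf{R}_0=n^{-1}\mathbf{J}$. Write $\mathbf{I}_{\mathcal{Q}}=\sum_{\mathbf{Q}\in\mathcal{Q}}\mathbf{Q}$ and $\mathbf{I}_{\mathcal{R}}=\sum_{\mathbf{R}\in\mathcal{R}}\mathbf{R}$. Suppose $\mathcal{Q}$ is structure balanced in relation to $\mathcal{P}$, and let $\mathbf{P}\in\mathcal{P}\setminus\{\mathbf{P}_0\}$. Then the following are equivalent: (i) $(\mathbf{P}\vartriangleright\mathbf{Q})\mathbf{I}_{\mathcal{R}}=\mathbf{0}$ for all $\mathbf{Q}\in\mathcal{Q}$ with $\lambda_{\mathbf{PQ}}\neq0$; (ii) $\mathbf{QPR}=\mathbf{0}$ for all $\mathbf{Q}\in\mathcal{Q}$ and all $\mathbf{R}\in\mathcal{R}$; (iii) $\mathbf{I}_{\mathcal{Q}}\mathbf{P}\mathbf{I}_{\mathcal{R}}=\mathbf{0}$.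 Moreover, if these conditions hold for every $\mathbf{P}\in\mathcal{P}\setminus\{\mathbf{P}_0\}$, then $V_\Upsilon\cap V_0^\perp$ is orthogonal to $V_\Gamma\cap V_0^\perp$ (where $V_0$ is the space of constant vectors), and for every $\upsilon\in\Upsilon$ and $\gamma\in\Gamma$ there exists $\omega\in\Omega$ with $f(\omega)=\upsilon$ and $g(\omega)=\gamma$.
   Context: $\mathbf{J}$ is the $n\times n$ all-ones matrix. $V_\Omega$ carries the standard inner product; all matrices are $\Omega\times\Omega$. An orthogonal decomposition of a subspace $W\le V_\Omega$ is a finite set of nonzero symmetric idempotent matrices that are mutually orthogonal and whose sum is the orthogonal projector onto $W$. For projectors $\mathbf{A},\mathbf{B}$: $\mathbf{B}$ has first-order balance in relation to $\mathbf{A}$ if $\mathbf{BAB}=\lambda_{\mathbf{AB}}\mathbf{B}$ for a scalar $\lambda_{\mathbf{AB}}$ (efficiency factor); if $\lambda_{\mathbf{AB}}\ne0$, $\mathbf{A}\vartriangleright\mathbf{B}=\lambda_{\mathbf{AB}}^{-1}\mathbf{ABA}$. $\mathcal{Q}$ is structure balanced in relation to $\mathcal{P}$ if every $\mathbf{Q}\in\mathcal{Q}$ has first-order balance in relation to every $\mathbf{P}\in\mathcal{P}$, and $\mathbf{Q}_1\mathbf{P}\mathbf{Q}_2=\mathbf{0}$ for all $\mathbf{P}\in\mathcal{P}$ and all distinct $\mathbf{Q}_1,\mathbf{Q}_2\in\mathcal{Q}$. *)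

(* Defs.v *)
From HB Require Import structures.
From mathcomp Require Import all_boot all_order all_algebra.
Set Implicit Arguments. Unset Strict Implicit. Unset Printing Implicit Defensive.
Import Order.TTheory GRing.Theory Num.Theory.
Local Open Scope ring_scope.

Section Defs.
Variables (R : realFieldType) (n : nat).

Definition dotv (u v : 'cV[R]_n) : R := \sum_i u i 0 * v i 0.

Definition is_orth_proj_onto (P : 'M[R]_n) (W : 'cV[R]_n -> Prop) : Prop :=
  P^T = P /\ P *m P = P /\ (forall v, W v <-> P *m v = v).

(* orthogonal decomposition of W: a finite set (duplicate-free list) of nonzero
   symmetric idempotent, mutually orthogonal matrices summing to the projector onto W *)
Definition orth_decomp (D : seq 'M[R]_n) (W : 'cV[R]_n -> Prop) : Prop :=
  [/\ uniq D,
      (forall A, A \in D -> [/\ A != 0, A^T = A & A *m A = A]),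
      (forall A B, A \in D -> B \in D -> A != B -> A *m B = 0)
    & is_orth_proj_onto (\sum_(A <- D) A) W].

Definition eff_factor (A B : 'M[R]_n) (lam : R) : Prop :=
  B *m A *m B = lam *: B.

Definition first_order_balance (A B : 'M[R]_n) : Prop :=
  exists lam, eff_factor A B lam.

Definition tri (A B : 'M[R]_n) (lam : R) : 'M[R]_n :=
  lam^-1 *: (A *m B *m A).

Definition structure_balanced (Qs Ps : seq 'M[R]_n) : Prop :=
  (forall Q P, Q \in Qs -> P \in Ps -> first_order_balance P Q) /\
  (forall P Q1 Q2, P \in Ps -> Q1 \in Qs -> Q2 \in Qs -> Q1 != Q2 ->
     Q1 *m P *m Q2 = 0).

Definition P0 : 'M[R]_n := (n%:R)^-1 *: const_mx 1.

End Defs.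

Definition fibre_space (R : realFieldType) (n : nat) (T : Type) (f : 'I_n -> T)
  (v : 'cV[R]_n) : Prop := forall i j, f i = f j -> v i 0 = v j 0.

Definition perp_const (R : realFieldType) (n : nat) (u : 'cV[R]_n) : Prop :=
  forall w : 'cV[R]_n, (forall i j, w i 0 = w j 0) -> dotv u w = 0.

(* Main.v *)
Require Import Defs.
From HB Require Import structures.
From mathcomp Require Import all_boot all_order all_algebra.
Import Order.TTheory GRing.Theory Num.Theory.
Local Open Scope ring_scope.

Lemma sum_absorb_r (R : realFieldType) n (D : seq 'M[R]_n) W A :
  orth_decomp D W -> A \in D -> (\sum_(B <- D) B) *m A = A.
Proof.
case=> uD hD hO _ hA; rewrite mulmx_suml (bigD1_seq A) //=.
have [_ _ ->] := hD A hA.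
rewrite big1_seq ?addr0 // => B /andP[nBA BD]; exact: hO.
Qed.

Lemma sum_absorb_l (R : realFieldType) n (D : seq 'M[R]_n) W A :
  orth_decomp D W -> A \in D -> A *m (\sum_(B <- D) B) = A.
Proof.
case=> uD hD hO _ hA; rewrite mulmx_sumr (bigD1_seq A) //=.
have [_ _ ->] := hD A hA.
rewrite big1_seq ?addr0 // => B /andP[nBA BD]; apply: hO => //.
by rewrite eq_sym.
Qed.

Lemma trTT (R : realFieldType) n (X : 'M[R]_n) : X^T *m X = 0 -> X = 0.
Proof.
move=> H; apply/matrixP => i j; rewrite mxE.
have /matrixP/(_ j j) := H; rewrite !mxE => h.
have h0 : forall k : 'I_n, true -> 0 <= X^T j k * X k j.
  by move=> k _; rewrite mxE -expr2 sqr_ge0.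
have := psumr_eq0P h0 h isT (i:=i).
by rewrite mxE -expr2 => /eqP; rewrite sqrf_eq0 => /eqP.
Qed.

Lemma dotvE (R : realFieldType) n (u v : 'cV[R]_n) : dotv u v = (u^T *m v) 0 0.
Proof. by rewrite /dotv mxE; apply: eq_bigr => i _; rewrite mxE. Qed.

Theorem lemma1 (R : realFieldType) (n : nat) (U G : finType)
  (f : 'I_n -> U) (g : 'I_n -> G)
  (f_surj : forall u, exists w, f w = u) (g_surj : forall c, exists w, g w = c)
  (Ps Qs Rs : seq 'M[R]_n)
  (hP : orth_decomp Ps (fun _ => True))
  (hQ : orth_decomp Qs (fibre_space f))
  (hR : orth_decomp Rs (fibre_space g))
  (hP0 : P0 R n \in Ps) (hQ0 : P0 R n \in Qs) (hR0 : P0 R n \in Rs)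
  (hbal : structure_balanced Qs Ps) :
  let IQ := \sum_(Q <- Qs) Q in
  let IR := \sum_(S <- Rs) S in
  (forall P, P \in Ps -> P != P0 R n ->
     ((forall Q lam, Q \in Qs -> eff_factor P Q lam -> lam != 0 ->
          tri P Q lam *m IR = 0)
      <-> (forall Q S, Q \in Qs -> S \in Rs -> Q *m P *m S = 0))
     /\
     ((forall Q S, Q \in Qs -> S \in Rs -> Q *m P *m S = 0)
      <-> IQ *m P *m IR = 0))
  /\
  ((forall P, P \in Ps -> P != P0 R n -> IQ *m P *m IR = 0) ->
     (forall u v : 'cV[R]_n, fibre_space f u -> perp_const u ->
        fibre_space g v -> perp_const v -> dotv u v = 0)
     /\ (forall (y : U) (c : G), exists w, f w = y /\ g w = c)).
Proof.
move=> IQ IR.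
have IRS : forall S, S \in Rs -> IR *m S = S := fun S => @sum_absorb_r _ _ _ _ S hR.
have QIQ : forall Q, Q \in Qs -> Q *m IQ = Q := fun Q => @sum_absorb_l _ _ _ _ Q hQ.
have symP : forall P, P \in Ps -> P^T = P /\ P *m P = P.
  by case: hP => _ hD _ _ P PP; have [_ -> ->] := hD P PP.
have symQ : forall Q, Q \in Qs -> Q^T = Q.
  by case: hQ => _ hD _ _ Q QQ; have [_ -> _] := hD Q QQ.
split.
- move=> P PP nP0.
  have h23 : (forall Q S, Q \in Qs -> S \in Rs -> Q *m P *m S = 0)
      <-> IQ *m P *m IR = 0.
    split.
    + move=> h; rewrite /IQ -mulmxA mulmx_suml big1_seq // => Q /andP[_ QQ].
      rewrite mulmxA /IR mulmx_sumr big1_seq // => S /andP[_ SR].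
      exact: h.
    + move=> h Q S QQ SR.
      rewrite -[Q](QIQ Q QQ) -[S](IRS S SR).
      have -> : Q *m IQ *m P *m (IR *m S) = Q *m (IQ *m P *m IR) *m S
        by rewrite !mulmxA.
      by rewrite h mulmx0 mul0mx.
  split=> //; split.
  + move=> hi Q S QQ SR.
    have [lam hlam] := hbal.1 Q P QQ PP.
    case: (eqVneq lam 0) => [l0|ln0].
    * have : (P *m Q)^T *m (P *m Q) = 0.
        rewrite trmx_mul (symP P PP).1 (symQ Q QQ) mulmxA -(mulmxA Q P P).
        by rewrite (symP P PP).2 hlam l0 scale0r.
      move/trTT => PQ0.
      have : (P *m Q)^T = 0 by rewrite PQ0 trmx0.
      by rewrite trmx_mul (symP P PP).1 (symQ Q QQ) => ->; rewrite mul0mx.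
    * have := hi Q lam QQ hlam ln0.
      rewrite /tri -scalemxAl => /eqP; rewrite scaler_eq0 invr_eq0 (negbTE ln0) /=.
      move=> /eqP h.
      have : Q *m (P *m Q *m P *m IR) = lam *: (Q *m P *m IR).
        by rewrite !mulmxA hlam -!scalemxAl.
      rewrite h mulmx0 => /esym/eqP; rewrite scaler_eq0 (negbTE ln0) /= => /eqP h2.
      by rewrite -(IRS S SR) mulmxA h2 mul0mx.
  + move=> hii Q lam QQ hlam ln0.
    rewrite /tri -scalemxAl.
    have -> : P *m Q *m P *m IR = P *m (Q *m P *m IR) by rewrite !mulmxA.
    have -> : Q *m P *m IR = 0.
      rewrite /IR mulmx_sumr big1_seq // => S /andP[_ SR]; exact: hii.
    by rewrite mulmx0 scaler0.
- move=> hall.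
  have Isum : \sum_(P <- Ps) P = 1%:M.
    case: hP => _ _ _ [_ [_ hpr]].
    apply/matrixP => i j.
    have e := (hpr (col j 1%:M)).1 I.
    have := congr1 (fun M : 'cV[R]_n => M i 0) e.
    rewrite !mxE => <-; rewrite -{1}[\sum_(P <- Ps) P]mulmx1 mxE.
    by apply: eq_bigr => k _; rewrite !mxE.
  have key : IQ *m IR = P0 R n.
    have -> : IQ *m IR = IQ *m (\sum_(P <- Ps) P) *m IR by rewrite Isum mulmx1.
    rewrite [X in X *m IR]mulmx_sumr mulmx_suml (bigD1_seq (P0 R n)) //=; last by case: hP.
    rewrite big1_seq => [|P /andP[nP PP]]; last exact: hall.
    by rewrite addr0 /IQ (@sum_absorb_r _ _ _ _ _ hQ hQ0) /IR (@sum_absorb_l _ _ _ _ _ hR hR0).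
  have IQT : IQ^T = IQ by case: hQ => _ _ _ [].
  have dotK : forall u v, fibre_space f u -> fibre_space g v ->
      dotv u v = dotv u (P0 R n *m v).
    move=> u v fu fv.
    have hu : IQ *m u = u by case: hQ => _ _ _ [_ [_ hpr]]; apply/hpr.
    have hv : IR *m v = v by case: hR => _ _ _ [_ [_ hpr]]; apply/hpr.
    have e : u^T *m v = (IQ *m u)^T *m (IR *m v) by rewrite hu hv.
    rewrite !dotvE e trmx_mul IQT -!mulmxA (mulmxA IQ) key //.
  have P0v : forall v : 'cV[R]_n, forall i,
      (P0 R n *m v) i 0 = (n%:R)^-1 * \sum_k v k 0.
    move=> v i; rewrite mxE mulr_sumr; apply: eq_bigr => k _.
    by rewrite !mxE mulr1.
  split.
  + move=> u v fu pu fv pv. rewrite dotK //. apply: pu => i j.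
    by rewrite !P0v.
  + move=> y c.
    case: (boolP [exists w, (f w == y) && (g w == c)]) =>
      [/existsP[w /andP[/eqP ? /eqP ?]]|hn]; first by exists w.
    exfalso.
    pose u : 'cV[R]_n := \col_i ((f i == y)%:R).
    pose v : 'cV[R]_n := \col_i ((g i == c)%:R).
    have := dotK u v _ _.
    have fu : fibre_space f u by move=> i j e; rewrite !mxE e.
    have fv : fibre_space g v by move=> i j e; rewrite !mxE e.
    move=> /(_ fu fv).
    rewrite /dotv big1 => [|i _]; last first.
      rewrite !mxE; move/existsPn: hn => /(_ i).
      by case: (f i == y); case: (g i == c); rewrite ?mul0r ?mulr0.
    have [w fw] := f_surj y.
    have [w' gw] := g_surj c.
    have npos : (0 < n)%N by apply: leq_ltn_trans (ltn_ord w).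
    have su : 0 < \sum_i u i 0.
      rewrite (bigD1 w) //= mxE fw eqxx.
      by apply: ltr_pwDl => //; apply: sumr_ge0 => i _; rewrite mxE ler0n.
    have sv : 0 < \sum_i v i 0.
      rewrite (bigD1 w') //= mxE gw eqxx.
      by apply: ltr_pwDl => //; apply: sumr_ge0 => i _; rewrite mxE ler0n.
    under eq_bigr do rewrite P0v.
    rewrite -mulr_suml => /esym/eqP; rewrite !mulf_eq0 invr_eq0 pnatr_eq0.
    by rewrite (gt_eqF su) (gt_eqF sv) eqn0Ngt npos.
Qed.
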